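(* If a group $G$ has a normal subgroup $N$ which is residually solvable and such that $G/N$ is amenable, then $G$ is residually amenable. If a group $G$ has a normal subgroup $N$ which is residually solvable and such that $G/N$ is elementary amenable, then $G$ is residually elementary amenable.
   Context: Groups are discrete. For a class $\mathcal{C}$ of groups, a group $G$ is residually $\mathcal{C}$ if for every $g\in G\setminus\{e\}$ there exist $C\in\mathcal{C}$ and a surjective homomorphism $\varphi\colon G\to C$ with $\varphi(g)\neq e$. Elementary amenable groups form the smallest class containing finite and solvable groups and closed under subgroups, quotients, extensions and direct limits. *)

(* Defs.v *)
From Stdlib Require Import Reals List.
Set Implicit Arguments.

Record Group := {
  gcar :> Type;
  gmul : gcar -> gcar -> gcar;
  gone : gcar;
  ginv : gcar -> gcar;
  gmulA : forall x y z, gmul x (gmul y z) = gmul (gmul x y) z;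
  gmul1 : forall x, gmul gone x = x;
  gmulV : forall x, gmul (ginv x) x = gone }.
Arguments gmul {_} _ _.
Arguments gone {_}.
Arguments ginv {_} _.

Definition is_hom {G H : Group} (f : G -> H) : Prop :=
  forall x y, f (gmul x y) = gmul (f x) (f y).
Definition injective {A B : Type} (f : A -> B) : Prop := forall x y, f x = f y -> x = y.
Definition surjective {A B : Type} (f : A -> B) : Prop := forall y, exists x, f x = y.

(* N --i--> G --p--> Q is a short exact sequence: i injective hom, p surjective
   hom, ker p = im i.  Thus N is (isomorphic to) a normal subgroup of G and
   Q is (isomorphic to) G/N. *)
Definition short_exact {N G Q : Group} (i : N -> G) (p : G -> Q) : Prop :=
  is_hom i /\ is_hom p /\ injective i /\ surjective p /\
  (forall x, p x = gone <-> exists n, i n = x).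

Definition residually (C : Group -> Prop) (G : Group) : Prop :=
  forall g : G, g <> gone ->
    exists (H : Group) (f : G -> H), C H /\ is_hom f /\ surjective f /\ f g <> gone.

Inductive gen {G : Group} (A : G -> Prop) : G -> Prop :=
| gen_in : forall a, A a -> gen A a
| gen_one : gen A gone
| gen_mul : forall a b, gen A a -> gen A b -> gen A (gmul a b)
| gen_inv : forall a, gen A a -> gen A (ginv a).

Definition commg {G : Group} (x y : G) : G :=
  gmul (gmul (ginv x) (ginv y)) (gmul x y).

Fixpoint derived (G : Group) (n : nat) : G -> Prop :=
  match n with
  | O => fun _ => True
  | S k => gen (fun z => exists x y, derived G k x /\ derived G k y /\ z = commg x y)
  end.

Definition solvable (G : Group) : Prop :=
  exists n, forall x, derived G n x -> x = gone.

Definition finite_group (G : Group) : Prop :=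
  exists l : list G, forall x, In x l.

Definition amenable (G : Group) : Prop :=
  exists m : (G -> Prop) -> R,
    m (fun _ => True) = 1%R /\
    (forall A, (0 <= m A)%R) /\
    (forall A B, (forall x, A x -> B x -> False) ->
        m (fun x => A x \/ B x) = (m A + m B)%R) /\
    (forall (g : G) A, m (fun x => A (gmul (ginv g) x)) = m A).

Definition is_direct_limit {I : Type} (le : I -> I -> Prop) (Gs : I -> Group)
  (f : forall i j, le i j -> Gs i -> Gs j) (L : Group) (g : forall i, Gs i -> L) : Prop :=
  (exists i : I, True) /\
  (forall i, le i i) /\
  (forall i j k, le i j -> le j k -> le i k) /\
  (forall i j, exists k, le i k /\ le j k) /\
  (forall i j h, is_hom (f i j h)) /\
  (forall i h x, f i i h x = x) /\
  (forall i j k hij hjk hik x, f j k hjk (f i j hij x) = f i k hik x) /\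
  (forall i, is_hom (g i)) /\
  (forall i j h x, g j (f i j h x) = g i x) /\
  (forall y : L, exists i x, g i x = y) /\
  (forall i x, g i x = gone <-> exists j h, f i j h x = gone).

Definition EA_closed (C : Group -> Prop) : Prop :=
  (forall G, finite_group G -> C G) /\
  (forall G, solvable G -> C G) /\
  (forall (H G : Group) (f : H -> G), is_hom f -> injective f -> C G -> C H) /\
  (forall (G H : Group) (f : G -> H), is_hom f -> surjective f -> C G -> C H) /\
  (forall (N G Q : Group) (i : N -> G) (p : G -> Q),
      short_exact i p -> C N -> C Q -> C G) /\
  (forall (I : Type) le (Gs : I -> Group) f (L : Group) g,
      is_direct_limit le Gs f L g -> (forall i, C (Gs i)) -> C L).

Definition elementary_amenable (G : Group) : Prop :=
  forall C, EA_closed C -> C G.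

(* Main.v *)
Require Import Defs.
From Stdlib Require Import Reals Lra Lia ZArith List Classical ClassicalEpsilon FunctionalExtensionality PropExtensionality ProofIrrelevance.

Module UF.
From mathcomp Require Import all_boot.
From mathcomp Require Import boolp classical_sets filter.
Lemma ultra_exists (J : Type) (F : (J -> Prop) -> Prop) :
  F (fun _ => True) ->
  (forall A B, F A -> F B -> F (fun x => A x /\ B x)) ->
  (forall A B : J -> Prop, (forall x, A x -> B x) -> F A -> F B) ->
  ~ F (fun _ => False) ->
  exists U : (J -> Prop) -> Prop,
    (forall A B, U A -> U B -> U (fun x => A x /\ B x)) /\
    (forall A B : J -> Prop, (forall x, A x -> B x) -> U A -> U B) /\
    ~ U (fun _ => False) /\
    (forall A, F A -> U A) /\
    (forall A, U A \/ U (fun x => ~ A x)).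
Proof.
move=> FT FI FS F0.
have PF : ProperFilter F.
  constructor; first exact: F0.
  constructor; [exact: FT| move=> A B; exact: FI | move=> A B; exact: FS].
have [U [UU FU]] := ultraFilterLemma PF.
exists U; split; [|split; [|split; [|split]]].
- move=> A B; exact: (@filterI _ U _ A B).
- move=> A B AB; exact: (@filterS _ U _ A B AB).
- exact: (@filter_not_empty _ U _).
- exact: FU.
- move=> A; exact: (@in_ultra_setVsetC _ U A UU).
Qed.
End UF.


Section GroupLemmas.
Variable G : Group.
Lemma gmulV_r : forall x : G, gmul x (ginv x) = gone.
Proof.
  intro x.
  transitivity (gmul (gmul (ginv (ginv x)) (ginv x)) (gmul x (ginv x))).
  { rewrite gmulV, gmul1. reflexivity. }
  rewrite <- gmulA, (gmulA G (ginv x) x), gmulV, gmul1, gmulV. reflexivity.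
Qed.
Lemma gmul1_r : forall x : G, gmul x gone = x.
Proof. intro x. rewrite <- (gmulV G x), gmulA, gmulV_r, gmul1. reflexivity. Qed.
Lemma ginv_inv : forall x : G, ginv (ginv x) = x.
Proof.
  intro x. rewrite <- (gmul1_r (ginv (ginv x))), <- (gmulV G x), gmulA, gmulV, gmul1. reflexivity.
Qed.
Lemma gmul_cancel_l : forall a x y : G, gmul a x = gmul a y -> x = y.
Proof.
  intros a x y H. rewrite <- (gmul1 G x), <- (gmul1 G y), <- (gmulV G a), <- !gmulA, H. reflexivity.
Qed.
Lemma ginv_mul : forall x y : G, ginv (gmul x y) = gmul (ginv y) (ginv x).
Proof.
  intros x y. apply (gmul_cancel_l (gmul x y)). rewrite gmulV_r.
  rewrite <- gmulA, (gmulA G y (ginv y)), gmulV_r, gmul1, gmulV_r. reflexivity.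
Qed.
Lemma ginv_one : ginv (@gone G) = gone.
Proof. rewrite <- (gmul1_r (ginv gone)), gmulV. reflexivity. Qed.
Lemma inv_unique : forall x y : G, gmul x y = gone -> y = ginv x.
Proof. intros x y H. apply (gmul_cancel_l x). rewrite H, gmulV_r. reflexivity. Qed.
Lemma gmul_eq1 : forall x y : G, gmul (ginv x) y = gone -> x = y.
Proof. intros x y H. apply inv_unique in H. rewrite H, ginv_inv. reflexivity. Qed.
End GroupLemmas.

Section HomLemmas.
Variables G H : Group.
Variable f : G -> H.
Hypothesis hf : is_hom f.
Lemma hom_one : f gone = gone.
Proof.
  apply (gmul_cancel_l H (f gone)). rewrite <- hf, gmul1, gmul1_r. reflexivity.
Qed.
Lemma hom_inv : forall x, f (ginv x) = ginv (f x).
Proof. intro x. apply inv_unique. rewrite <- hf, gmulV_r, hom_one. reflexivity. Qed.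
End HomLemmas.

Lemma gcanc1 : forall (G : Group) (x z : G), gmul (ginv x) (gmul x z) = z.
Proof. intros. rewrite gmulA, gmulV, gmul1. reflexivity. Qed.
Lemma gcanc2 : forall (G : Group) (x z : G), gmul x (gmul (ginv x) z) = z.
Proof. intros. rewrite gmulA, gmulV_r, gmul1. reflexivity. Qed.

Ltac gsimp := repeat (rewrite ?ginv_mul, ?ginv_inv, ?ginv_one, <- ?gmulA, ?gmul1, ?gmul1_r,
   ?gmulV, ?gmulV_r, ?gcanc1, ?gcanc2).

Open Scope R_scope.

Lemma pred_ext {T : Type} (A B : T -> Prop) : (forall x, A x <-> B x) -> A = B.
Proof. intro H. apply functional_extensionality; intro x. apply propositional_extensionality, H. Qed.

Definition is_mean {T : Type} (m : (T -> Prop) -> R) : Prop :=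
  m (fun _ => True) = 1 /\ (forall A, 0 <= m A) /\
  (forall A B, (forall x, A x -> B x -> False) -> m (fun x => A x \/ B x) = m A + m B).

Section MeanLemmas.
Variable T : Type.
Variable m : (T -> Prop) -> R.
Hypothesis hm : is_mean m.
Lemma mean_ext : forall A B, (forall x, A x <-> B x) -> m A = m B.
Proof. intros A B H. rewrite (pred_ext A B H). reflexivity. Qed.
Lemma mean_add : forall A B, (forall x, A x -> B x -> False) -> m (fun x => A x \/ B x) = m A + m B.
Proof. apply hm. Qed.
Lemma mean_nonneg : forall A, 0 <= m A.
Proof. apply hm. Qed.
Lemma mean_false : m (fun _ => False) = 0.
Proof.
  assert (H := mean_add (fun _ => False) (fun _ => False) (fun _ f _ => f)).
  cbv beta in H. rewrite (mean_ext (fun x => False \/ False) (fun _ => False)) in H by tauto. lra.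
Qed.
Lemma mean_mono : forall A B, (forall x, A x -> B x) -> m A <= m B.
Proof.
  intros A B H.
  assert (E := mean_add A (fun x => B x /\ ~ A x) (fun x a b => proj2 b a)).
  cbv beta in E. rewrite (mean_ext (fun x => A x \/ (B x /\ ~ A x)) B) in E.
  - pose proof (mean_nonneg (fun x => B x /\ ~ A x)). lra.
  - intro x; split; [intros [a|[b _]]; auto | intro b; destruct (classic (A x)); auto].
Qed.
Lemma mean_le1 : forall A, m A <= 1.
Proof. intro A. destruct hm as [h1 _]. rewrite <- h1. apply mean_mono. auto. Qed.
End MeanLemmas.

Lemma amenable_image : forall (G H : Group) (f : G -> H), is_hom f -> surjective f ->
  amenable G -> amenable H.
Proof.
  intros G H f hf sf [m [m1 [m0 [madd minv]]]].
  exists (fun B => m (fun x => B (f x))). split; [|split; [|split]].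
  - exact m1.
  - intro A; apply m0.
  - intros A B D. apply (madd (fun x => A (f x)) (fun x => B (f x))). intros x; apply D.
  - intros h B. destruct (sf h) as [g <-].
    rewrite <- (minv g (fun x => B (f x))).
    f_equal. apply functional_extensionality; intro x.
    rewrite hf, (hom_inv G H f hf). reflexivity.
Qed.

Fixpoint sumR (n : nat) (h : nat -> R) : R :=
  match n with O => 0 | S k => sumR k h + h k end.

Lemma sumR_ext : forall n h1 h2, (forall t, (t < n)%nat -> h1 t = h2 t) -> sumR n h1 = sumR n h2.
Proof. induction n; intros h1 h2 H; simpl; auto. rewrite (IHn h1 h2), H; auto. Qed.
Lemma sumR_plus : forall n h1 h2, sumR n (fun t => h1 t + h2 t) = sumR n h1 + sumR n h2.
Proof. induction n; intros; simpl; [lra|]. rewrite IHn. lra. Qed.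
Lemma sumR_const : forall n c, sumR n (fun _ => c) = INR n * c.
Proof. induction n; intros; simpl sumR; [simpl; lra|]. rewrite IHn, S_INR. lra. Qed.
Lemma sumR_nonneg : forall n h, (forall t, 0 <= h t) -> 0 <= sumR n h.
Proof. induction n; intros h H; simpl; [lra|]. pose proof (IHn h H). pose proof (H n). lra. Qed.
Lemma sumR_le : forall n h1 h2, (forall t, h1 t <= h2 t) -> sumR n h1 <= sumR n h2.
Proof. induction n; intros h1 h2 H; simpl; [lra|]. pose proof (IHn h1 h2 H). pose proof (H n). lra. Qed.
Lemma sumR_tele : forall n c, sumR n (fun t => c (S t)) - sumR n c = c n - c O.
Proof. induction n; intros; simpl; [lra|]. pose proof (IHn c). lra. Qed.
Lemma sumR_scal : forall n c h, sumR n (fun t => c * h t) = c * sumR n h.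
Proof. induction n; intros; simpl; [lra|]. rewrite IHn. lra. Qed.

Lemma sumR_minus : forall n h1 h2, sumR n h1 - sumR n h2 = sumR n (fun t => h1 t - h2 t).
Proof. induction n; intros; simpl; [lra|]. rewrite <- IHn. lra. Qed.
Lemma sumR_abs : forall n h, Rabs (sumR n h) <= sumR n (fun t => Rabs (h t)).
Proof.
  induction n; intros; simpl. { rewrite Rabs_R0. lra. }
  eapply Rle_trans; [apply Rabs_triang|]. apply Rplus_le_compat_r. apply IHn.
Qed.

Fixpoint gpow {G : Group} (b : G) (t : nat) : G :=
  match t with O => gone | S k => gmul b (gpow b k) end.

Definition shiftB {G : Group} (g : G) (B : G -> Prop) : G -> Prop := fun x => B (gmul (ginv g) x).

Definition approx_inv {G : Group} (mu : (G -> Prop) -> R) (g : G) (e : R) : Prop :=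
  forall B, Rabs (mu (shiftB g B) - mu B) <= e.

Lemma abelian_approx (A : Group) (comm : forall x y : A, gmul x y = gmul y x) :
  forall (N : nat) (L : list A), exists mu, is_mean mu /\
    forall g, In g L -> approx_inv mu g (/ INR (S N)).
Proof.
  intros N L. induction L as [|a L IH].
  - exists (fun B => if excluded_middle_informative (B gone) then 1 else 0).
    split; [|intros g []].
    split; [|split].
    + destruct (excluded_middle_informative True); [reflexivity|tauto].
    + intro B; destruct (excluded_middle_informative (B gone)); lra.
    + intros B C D. destruct (excluded_middle_informative (B gone)), (excluded_middle_informative (C gone)),
       (excluded_middle_informative (B gone \/ C gone)); try tauto; try lra.
      exfalso; eauto.
  - destruct IH as [mu [hmu Hmu]].
    set (b := ginv a).
    set (n := S N).
    assert (npos : 0 < INR n) by (apply lt_0_INR; unfold n; lia).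
    exists (fun B => / INR n * sumR n (fun t => mu (fun x => B (gmul (gpow b t) x)))).
    split.
    + split; [|split].
      * rewrite sumR_ext with (h2 := fun _ => 1).
        { rewrite sumR_const. field. lra. }
        intros t _. apply hmu.
      * intro B. apply Rmult_le_pos. { left; apply Rinv_0_lt_compat; lra. }
        apply sumR_nonneg. intro; apply (mean_nonneg _ mu hmu).
      * intros B C D. rewrite <- Rmult_plus_distr_l, <- sumR_plus. f_equal.
        apply sumR_ext. intros t _. apply (mean_add _ mu hmu (fun x => B (gmul (gpow b t) x))).
        intros x; apply D.
    + intros g [<-|Hg] B.
      * unfold shiftB.
        set (c := fun t => mu (fun x => B (gmul (gpow b t) x))).
        rewrite sumR_ext with (h2 := fun t => c (S t)).
        2:{ intros t _. unfold c. f_equal. apply functional_extensionality; intro x.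
            simpl. rewrite gmulA. reflexivity. }
        rewrite <- Rmult_minus_distr_l.
        fold c. rewrite sumR_tele.
        assert (0 <= c n <= 1) by (unfold c; split; [apply (mean_nonneg _ mu hmu)|apply (mean_le1 _ mu hmu)]).
        assert (0 <= c O <= 1) by (unfold c; split; [apply (mean_nonneg _ mu hmu)|apply (mean_le1 _ mu hmu)]).
        rewrite Rabs_mult, Rabs_inv, (Rabs_pos_eq (INR n)) by lra.
        fold n. rewrite <- (Rmult_1_r (/ INR n)) at 2.
        apply Rmult_le_compat_l. { left; apply Rinv_0_lt_compat; lra. }
        apply Rabs_le; lra.
      * specialize (Hmu g Hg).
        rewrite <- Rmult_minus_distr_l.
        rewrite Rabs_mult, Rabs_inv, (Rabs_pos_eq (INR n)) by lra.
        apply Rle_trans with (/ INR n * (INR n * / INR n)).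
        2:{ right. fold n. field. lra. }
        apply Rmult_le_compat_l. { left; apply Rinv_0_lt_compat; lra. }
        rewrite <- sumR_const, sumR_minus.
        eapply Rle_trans; [apply sumR_abs|].
        apply sumR_le. intro t.
        specialize (Hmu (fun x => B (gmul (gpow b t) x))).
        unfold shiftB in *.
        replace (mu (fun x => B (gmul (ginv g) (gmul (gpow b t) x))))
          with (mu (fun x => B (gmul (gpow b t) (gmul (ginv g) x)))); [exact Hmu|].
        f_equal. apply functional_extensionality; intro x.
        rewrite !gmulA, (comm (ginv g)). reflexivity.
Qed.

Section Ultra.
Variable J : Type.
Variable U : (J -> Prop) -> Prop.
Hypothesis UI : forall A B, U A -> U B -> U (fun x => A x /\ B x).
Hypothesis UM : forall A B : J -> Prop, (forall x, A x -> B x) -> U A -> U B.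
Hypothesis U0 : ~ U (fun _ => False).
Hypothesis UT : U (fun _ => True).
Hypothesis Uultra : forall A, U A \/ U (fun x => ~ A x).

Lemma U_ex : forall A, U A -> exists j, A j.
Proof.
  intros A HA. apply NNPP; intro H. apply U0. apply (UM A); auto.
  intros x Ax. apply H; eauto.
Qed.

Definition ulim (f : J -> R) (l : R) : Prop := forall eps, 0 < eps -> U (fun j => Rabs (f j - l) < eps).

Lemma ulim_unique : forall f l1 l2, ulim f l1 -> ulim f l2 -> l1 = l2.
Proof.
  intros f l1 l2 H1 H2. apply NNPP; intro Hne.
  set (e := Rabs (l1 - l2) / 2).
  assert (0 < e). { unfold e. assert (l1 - l2 <> 0) by lra. pose proof (Rabs_pos_lt _ H). lra. }
  destruct (U_ex _ (UI _ _ (H1 e H) (H2 e H))) as [j [a b]].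
  assert (Rabs (l1 - l2) <= Rabs (f j - l1) + Rabs (f j - l2)).
  { replace (l1 - l2) with (- (f j - l1) + (f j - l2)) by ring.
    eapply Rle_trans; [apply Rabs_triang|]. rewrite Rabs_Ropp. lra. }
  unfold e in *. lra.
Qed.

Lemma ulim_exists : forall f, (forall j, 0 <= f j <= 1) -> exists l, ulim f l.
Proof.
  intros f Hf.
  set (E := fun t => U (fun j => t <= f j)).
  assert (Eb : bound E).
  { exists 1. intros t Et. apply NNPP; intro Hn. apply U0. apply (UM _ _ ) with (2 := Et).
    intros j Hj. specialize (Hf j). lra. }
  assert (Ene : exists x, E x). { exists 0. apply (UM (fun _ => True)); auto. intros j _. apply Hf. }
  destruct (completeness E Eb Ene) as [l [Hub Hlub]].
  exists l. intros eps Heps.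
  assert (L1 : U (fun j => l - eps < f j)).
  { apply NNPP; intro Hn.
    assert (forall t, E t -> t <= l - eps).
    { intros t Et. apply Rnot_lt_le; intro Hlt. apply Hn. apply (UM _ _ ) with (2 := Et).
      intros j Hj. lra. }
    pose proof (Hlub (l - eps) H). lra. }
  assert (L2 : U (fun j => f j < l + eps)).
  { destruct (Uultra (fun j => f j < l + eps)) as [H|H]; auto.
    assert (E (l + eps)). { apply (UM _ _ ) with (2 := H). intros j Hj. lra. }
    pose proof (Hub _ H0). lra. }
  apply (UM _ _ ) with (2 := UI _ _ L1 L2). intros j [a b]. apply Rabs_def1; lra.
Qed.

Lemma ulim_const : forall c, ulim (fun _ => c) c.
Proof. intros c eps He. apply (UM (fun _ => True)); auto. intros. rewrite Rminus_diag, Rabs_R0. auto. Qed.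

Lemma ulim_plus : forall f g lf lg, ulim f lf -> ulim g lg -> ulim (fun j => f j + g j) (lf + lg).
Proof.
  intros f g lf lg Hf Hg eps He.
  apply (UM _ _ ) with (2 := UI _ _ (Hf (eps/2) ltac:(lra)) (Hg (eps/2) ltac:(lra))).
  intros j [a b]. replace (f j + g j - (lf + lg)) with ((f j - lf) + (g j - lg)) by ring.
  eapply Rle_lt_trans; [apply Rabs_triang|]. lra.
Qed.
End Ultra.

Lemma approx_amenable (A : Group) :
  (forall (N : nat) (L : list A), exists mu, is_mean mu /\
    forall g, In g L -> approx_inv mu g (/ INR (S N))) -> amenable A.
Proof.
  intro H.
  set (J := (nat * list A)%type).
  set (F := fun S : J -> Prop => exists N0 L0, forall N L, (N0 <= N)%nat -> incl L0 L -> S (N, L)).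
  destruct (UF.ultra_exists J F) as [U [UI [UM [U0 [FU Uu]]]]].
  { exists O, nil. auto. }
  { intros S1 S2 [N1 [L1 H1]] [N2 [L2 H2]]. exists (max N1 N2), (L1 ++ L2).
    intros N L HN HL. split; [apply H1|apply H2]; try lia;
      intros x Hx; apply HL; apply in_or_app; auto. }
  { intros S1 S2 Hs [N1 [L1 H1]]. exists N1, L1. auto. }
  { intros [N0 [L0 H0]]. apply (H0 N0 L0); auto. apply incl_refl. }
  assert (UT : U (fun _ => True)). { apply FU. exists O, nil. auto. }
  set (mu := fun j : J => proj1_sig (constructive_indefinite_description _ (H (fst j) (snd j)))).
  assert (Hmu : forall j, is_mean (mu j) /\ forall g, In g (snd j) -> approx_inv (mu j) g (/ INR (S (fst j))))
    by (intro j; unfold mu; apply proj2_sig).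
  assert (Hl : forall B, exists l, ulim J U (fun j => mu j B) l).
  { intro B. apply ulim_exists; auto. intro j. destruct (Hmu j) as [hm _].
    split; [apply (mean_nonneg _ _ hm) | apply (mean_le1 _ _ hm)]. }
  set (m := fun B => proj1_sig (constructive_indefinite_description _ (Hl B))).
  assert (Hm : forall B, ulim J U (fun j => mu j B) (m B)) by (intro B; unfold m; apply proj2_sig).
  pose proof (ulim_unique J U UI UM U0) as Uq.
  pose proof (ulim_const J U UM UT) as Uc.
  pose proof (ulim_plus J U UI UM) as Up.
  pose proof (U_ex J U UM U0) as Ue.
  exists m. split; [|split; [|split]].
  - apply (Uq (fun j => mu j (fun _ => True))); auto.
    replace (fun j => mu j (fun _ => True)) with (fun _ : J => 1); auto.
    apply functional_extensionality; intro j. destruct (Hmu j) as [[h1 _] _]. auto.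
  - intro B. apply Rnot_lt_le; intro Hlt.
    destruct (Ue _ (Hm B (- m B) ltac:(lra))) as [j Hj].
    destruct (Hmu j) as [hm _]. pose proof (mean_nonneg _ _ hm B).
    apply Rabs_def2 in Hj. lra.
  - intros B C D. apply (Uq (fun j => mu j (fun x => B x \/ C x))); auto.
    replace (fun j => mu j (fun x => B x \/ C x)) with (fun j => mu j B + mu j C).
    + apply Up; auto.
    + apply functional_extensionality; intro j. destruct (Hmu j) as [hm _].
      symmetry. apply (mean_add _ _ hm). auto.
  - intros g B. apply NNPP; intro Hne.
    set (e := Rabs (m (fun x => B (gmul (ginv g) x)) - m B) / 3).
    assert (He : 0 < e). { unfold e. assert (m (fun x => B (gmul (ginv g) x)) - m B <> 0) by lra.
      pose proof (Rabs_pos_lt _ H0). lra. }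
    destruct (archimed (/ e)) as [Ha _].
    assert (exists N0 : nat, / INR (S N0) < e) as [N0 HN0].
    { destruct (archimed (/ e)) as [Hb _].
      exists (Z.to_nat (up (/ e))).
      assert (0 < / e) by (apply Rinv_0_lt_compat; auto).
      assert (IZR (up (/ e)) <= INR (Z.to_nat (up (/ e)))).
      { assert (0 < up (/ e))%Z by (apply lt_IZR; simpl; lra).
        rewrite INR_IZR_INZ. apply IZR_le. lia. }
      rewrite S_INR.
      assert (Hq : / e < INR (Z.to_nat (up (/ e))) + 1) by lra.
      apply Rinv_lt_contravar in Hq. { rewrite Rinv_inv in Hq. exact Hq. }
      apply Rmult_lt_0_compat; auto. pose proof (pos_INR (Z.to_nat (up (/ e)))). lra. }
    assert (FS : U (fun j => (N0 <= fst j)%nat /\ incl (g :: nil) (snd j))).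
    { apply FU. exists N0, (g :: nil). simpl. auto. }
    destruct (Ue _ (UI _ _ FS (UI _ _ (Hm (fun x => B (gmul (ginv g) x)) e He) (Hm B e He))))
      as [[N L] [[h1 h2] [h3 h4]]].
    simpl in h1, h2. cbv beta in h3, h4.
    destruct (Hmu (N, L)) as [_ Hap]. cbn [fst snd] in Hap.
    specialize (Hap g (h2 g (or_introl eq_refl)) B). unfold shiftB in Hap.
    assert (/ INR (S N) <= / INR (S N0)).
    { apply Rinv_le_contravar. { apply lt_0_INR. lia. } apply le_INR. lia. }
    assert (Rabs (m (fun x => B (gmul (ginv g) x)) - m B) <=
      Rabs (mu (N, L) (fun x => B (gmul (ginv g) x)) - m (fun x => B (gmul (ginv g) x))) +
      Rabs (mu (N, L) (fun x => B (gmul (ginv g) x)) - mu (N, L) B) +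
      Rabs (mu (N, L) B - m B)).
    { set (a := mu (N, L) (fun x => B (gmul (ginv g) x))). set (b := mu (N, L) B).
      replace (m (fun x => B (gmul (ginv g) x)) - m B) with
        (- (a - m (fun x => B (gmul (ginv g) x))) + (a - b) + (b - m B)) by ring.
      eapply Rle_trans; [apply Rabs_triang|]. eapply Rle_trans; [apply Rplus_le_compat_r, Rabs_triang|].
      rewrite Rabs_Ropp. lra. }
    unfold e in *. lra.
Qed.

Lemma abelian_amenable (A : Group) : (forall x y : A, gmul x y = gmul y x) -> amenable A.
Proof. intro c. apply approx_amenable. apply abelian_approx. exact c. Qed.

Definition fl (x : R) : nat := Z.to_nat (up x - 1).

Lemma fl_spec : forall x, 0 <= x -> INR (fl x) <= x < INR (fl x) + 1.
Proof.
  intros x Hx. destruct (archimed x) as [H1 H2].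
  assert (0 < up x)%Z by (apply lt_IZR; simpl; lra).
  unfold fl. rewrite INR_IZR_INZ, Z2Nat.id by lia.
  rewrite minus_IZR. simpl. lra.
Qed.
Lemma fl_ge : forall y k, 0 <= y -> INR k <= y -> (k <= fl y)%nat.
Proof.
  intros y k Hy Hk. destruct (fl_spec y Hy). apply Nat.lt_succ_r. apply INR_lt. rewrite S_INR. lra.
Qed.
Lemma fl_lt : forall y k, 0 <= y -> y < INR k -> (fl y < k)%nat.
Proof. intros y k Hy Hk. destruct (fl_spec y Hy). apply INR_lt. lra. Qed.

Definition ind {T : Type} (S : T -> Prop) (q : T) : nat :=
  if excluded_middle_informative (S q) then 1%nat else 0%nat.

Section Integ.
Variable Q : Group.
Variable m : (Q -> Prop) -> R.
Hypothesis hm : is_mean m.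

Definition Tm (K : nat) (f : Q -> nat) : R := sumR K (fun j => m (fun q => (S j <= f q)%nat)).

Lemma m_true : m (fun _ => True) = 1. Proof. apply hm. Qed.

Lemma sum_level : forall (S : Q -> Prop) (f : Q -> nat) K,
  sumR K (fun j => m (fun q => S q /\ f q = j)) = m (fun q => S q /\ (f q < K)%nat).
Proof.
  intros S f K. induction K; simpl.
  - rewrite (mean_ext _ m _ (fun _ => False)) by (intros; split; [intros [_ a]; lia| tauto]).
    rewrite (mean_false _ m hm). reflexivity.
  - rewrite IHK. rewrite <- (mean_add _ m hm).
    + apply (mean_ext _ m). intro q. destruct (Nat.lt_ge_cases (f q) K); intuition lia.
    + intros q [_ a] [_ b]. lia.
Qed.

Lemma T_indic : forall K f (P : Q -> Prop), (forall q, (f q + ind P q <= K)%nat) ->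
  Tm K (fun q => (f q + ind P q)%nat) = Tm K f + m P.
Proof.
  intros K f P HK. unfold Tm.
  rewrite sumR_ext with (h2 := fun j => m (fun q => (S j <= f q)%nat) + m (fun q => P q /\ f q = j)).
  - rewrite sumR_plus, sum_level. f_equal. apply (mean_ext _ m). intro q.
    specialize (HK q). unfold ind in *. destruct (excluded_middle_informative (P q)); intuition lia.
  - intros j _. rewrite <- (mean_add _ m hm).
    + apply (mean_ext _ m). intro q. unfold ind.
      destruct (excluded_middle_informative (P q)); destruct (Nat.eq_dec (f q) j); intuition lia.
    + intros q a [b c]. lia.
Qed.

Lemma T_zero : forall K, Tm K (fun _ => O) = 0.
Proof.
  intro K. unfold Tm. rewrite sumR_ext with (h2 := fun _ => 0). { rewrite sumR_const. lra. }
  intros. rewrite (mean_ext _ m _ (fun _ => False)) by (intros; lia). apply (mean_false _ m hm).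
Qed.

Lemma T_add : forall B K f g, (forall q, (g q <= B)%nat) -> (forall q, (f q + g q <= K)%nat) ->
  Tm K (fun q => (f q + g q)%nat) = Tm K f + Tm K g.
Proof.
  induction B; intros K f g HB HK.
  - assert (E : g = fun _ => O) by (apply functional_extensionality; intro q; specialize (HB q); lia).
    subst g. rewrite T_zero. replace (fun q => (f q + 0)%nat) with f. { lra. }
    apply functional_extensionality; intro; lia.
  - set (g1 := fun q => Nat.min (g q) B). set (P := fun q => (S B <= g q)%nat).
    assert (Eg : g = fun q => (g1 q + ind P q)%nat).
    { apply functional_extensionality; intro q. unfold g1, P, ind.
      specialize (HB q); destruct (excluded_middle_informative _); lia. }
    assert (B1 : forall q, (g1 q <= B)%nat) by (intro q; unfold g1; lia).
    assert (Hsum : forall q, (g q <= K)%nat) by (intro q; specialize (HK q); lia).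
    rewrite Eg in HK, Hsum |- *.
    replace (fun q => (f q + (g1 q + ind P q))%nat) with (fun q => ((f q + g1 q) + ind P q)%nat)
      by (apply functional_extensionality; intro; lia).
    rewrite T_indic by (intro q; specialize (HK q); lia).
    rewrite T_indic by auto.
    rewrite IHB; auto. { lra. } intro q; specialize (HK q); lia.
Qed.

Lemma T_nonneg : forall K f, 0 <= Tm K f.
Proof. intros. apply sumR_nonneg. intro; apply (mean_nonneg _ m hm). Qed.

Lemma T_le : forall K f, Tm K f <= INR K.
Proof.
  intros. unfold Tm. rewrite <- (Rmult_1_r (INR K)), <- sumR_const. apply sumR_le. intro; apply (mean_le1 _ m hm).
Qed.

Lemma T_mono : forall K f g, (forall q, (f q <= g q)%nat) -> (forall q, (g q <= K)%nat) -> Tm K f <= Tm K g.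
Proof.
  intros K f g H HK.
  replace g with (fun q => (f q + (g q - f q))%nat) by (apply functional_extensionality; intro q; specialize (H q); lia).
  rewrite (T_add K K) by (intro q; specialize (H q); specialize (HK q); lia).
  pose proof (T_nonneg K (fun q => (g q - f q)%nat)). lra.
Qed.

Lemma T_ext : forall K K' f, (forall q, (f q <= K)%nat) -> (K <= K')%nat -> Tm K' f = Tm K f.
Proof.
  intros K K' f HK HK'. induction HK'; auto.
  unfold Tm in *. simpl. rewrite IHHK'.
  rewrite (mean_ext _ m _ (fun _ => False)) by (intro q; specialize (HK q); lia).
  rewrite (mean_false _ m hm). lra.
Qed.

Lemma T_const : forall K c, (c <= K)%nat -> Tm K (fun _ => c) = INR c.
Proof.
  intros K c Hc. rewrite (T_ext c K) by auto. clear Hc K.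
  induction c.
  - apply T_zero.
  - replace (fun _ : Q => S c) with (fun q : Q => (c + ind (fun _ => True) q)%nat).
    2:{ apply functional_extensionality; intro q. unfold ind.
        destruct (excluded_middle_informative True); [lia|tauto]. }
    rewrite T_indic.
    2:{ intro q. unfold ind. destruct (excluded_middle_informative True); lia. }
    rewrite (T_ext c (S c)) by auto.
    rewrite IHc, m_true, S_INR. reflexivity.
Qed.

Lemma T_scale : forall k K f, (forall q, (k * f q <= K)%nat) -> Tm K (fun q => (k * f q)%nat) = INR k * Tm K f.
Proof.
  induction k; intros K f H.
  - simpl. replace (fun _ : Q => 0%nat) with (fun _ : Q => 0%nat). rewrite T_zero. lra. reflexivity.
  - replace (fun q => (S k * f q)%nat) with (fun q => (k * f q + f q)%nat)
      by (apply functional_extensionality; intro; lia).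
    rewrite (T_add K K) by (try (intro q; specialize (H q); lia)).
    rewrite IHk by (intro q; specialize (H q); lia). rewrite S_INR. lra.
Qed.

Lemma T_transl : (forall g A, m (fun x => A (gmul (ginv g) x)) = m A) ->
  forall K f h, Tm K (fun q => f (gmul h q)) = Tm K f.
Proof.
  intros minv K f h. unfold Tm. apply sumR_ext. intros j _.
  rewrite <- (minv (ginv h) (fun q => (S j <= f q)%nat)). rewrite ginv_inv. reflexivity.
Qed.

Definition an (n : nat) (phi : Q -> R) : R := Tm n (fun q => fl (INR n * phi q)) / INR n.

Section Phi.
Variable phi : Q -> R.
Hypothesis hphi : forall q, 0 <= phi q <= 1.

Lemma fl_bound : forall n q, (fl (INR n * phi q) <= n)%nat.
Proof.
  intros n q. specialize (hphi q). pose proof (pos_INR n).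
  apply Nat.lt_succ_r. apply fl_lt. { apply Rmult_le_pos; lra. }
  rewrite S_INR. nra.
Qed.

Lemma an_le_mult : forall k n, (1 <= k)%nat -> (1 <= n)%nat -> an k phi <= an (k * n) phi.
Proof.
  intros k n Hk Hn. unfold an.
  assert (Hkp : 0 < INR k) by (apply lt_0_INR; lia).
  assert (Hnp : 0 < INR n) by (apply lt_0_INR; lia).
  assert (L : INR n * Tm k (fun q => fl (INR k * phi q)) <= Tm (k * n) (fun q => fl (INR (k * n) * phi q))).
  { rewrite <- (T_ext k (k * n)) by (try apply fl_bound; nia).
    rewrite <- T_scale.
    2:{ intro q. pose proof (fl_bound k q). nia. }
    apply T_mono; [|apply fl_bound].
    intro q. specialize (hphi q). apply fl_ge.
    { rewrite mult_INR. apply Rmult_le_pos; [apply Rmult_le_pos|]; lra. }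
    rewrite mult_INR, mult_INR.
    destruct (fl_spec (INR k * phi q)) as [a _]. { apply Rmult_le_pos; lra. }
    nra. }
  set (X := Tm k (fun q => fl (INR k * phi q))) in *.
  set (Y := Tm (k * n) (fun q => fl (INR (k * n) * phi q))) in *.
  rewrite mult_INR.
  apply Rmult_le_reg_l with (INR k * INR n). { nra. }
  replace (INR k * INR n * (X / INR k)) with (INR n * X) by (field; lra).
  replace (INR k * INR n * (Y / (INR k * INR n))) with Y by (field; lra).
  exact L.
Qed.

Lemma an_mult_le : forall k n, (1 <= k)%nat -> (1 <= n)%nat -> an (k * n) phi <= an n phi + / INR n.
Proof.
  intros k n Hk Hn. unfold an.
  assert (Hkp : 0 < INR k) by (apply lt_0_INR; lia).
  assert (Hnp : 0 < INR n) by (apply lt_0_INR; lia).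
  set (fn := fun q => fl (INR n * phi q)).
  assert (L : Tm (k * n) (fun q => fl (INR (k * n) * phi q)) <= INR k * (Tm n fn + 1)).
  { rewrite <- (T_ext (k * n) (k * n + k)) by (try apply fl_bound; lia).
    apply Rle_trans with (Tm (k * n + k) (fun q => (k * (fn q + 1))%nat)).
    { apply T_mono.
      - intro q. apply Nat.lt_succ_r. apply fl_lt.
        { specialize (hphi q). rewrite mult_INR. apply Rmult_le_pos; [apply Rmult_le_pos|]; lra. }
        rewrite S_INR, mult_INR, mult_INR, plus_INR. simpl (INR 1).
        specialize (hphi q). destruct (fl_spec (INR n * phi q)) as [_ b]. { apply Rmult_le_pos; lra. }
        unfold fn. nra.
      - intro q. pose proof (fl_bound n q). unfold fn. nia. }
    rewrite T_scale by (intro q; pose proof (fl_bound n q); unfold fn; nia).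
    rewrite (T_add 1 (k * n + k)) by (try (intro q; pose proof (fl_bound n q); unfold fn; nia); intro; lia).
    rewrite (T_const (k * n + k) 1) by lia.
    rewrite (T_ext n (k * n + k)) by (try (intro q; apply fl_bound); nia).
    simpl (INR 1). lra. }
  fold fn.
  set (X := Tm n fn) in *.
  set (Y := Tm (k * n) (fun q => fl (INR (k * n) * phi q))) in *.
  rewrite mult_INR.
  apply Rmult_le_reg_l with (INR k * INR n). { nra. }
  replace (INR k * INR n * (Y / (INR k * INR n))) with Y by (field; lra).
  replace (INR k * INR n * (X / INR n + / INR n)) with (INR k * (X + 1)) by (field; lra).
  exact L.
Qed.

Lemma an_cmp : forall k n, (1 <= k)%nat -> (1 <= n)%nat -> an k phi <= an n phi + / INR n.
Proof.
  intros k n Hk Hn. eapply Rle_trans; [apply (an_le_mult k n)|apply an_mult_le]; auto.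
Qed.

Lemma an_range : forall n, (1 <= n)%nat -> 0 <= an n phi <= 1.
Proof.
  intros n Hn. unfold an. assert (0 < INR n) by (apply lt_0_INR; lia).
  pose proof (T_nonneg n (fun q => fl (INR n * phi q))).
  pose proof (T_le n (fun q => fl (INR n * phi q))).
  split. { apply Rmult_le_pos; [lra|left; apply Rinv_0_lt_compat; lra]. }
  apply Rmult_le_reg_l with (INR n); [lra|]. unfold Rdiv.
  replace (INR n * (Tm n (fun q => fl (INR n * phi q)) * / INR n)) with (Tm n (fun q => fl (INR n * phi q))) by (field; lra).
  lra.
Qed.
End Phi.

Definition Eset (phi : Q -> R) : R -> Prop := fun x => exists n, x = an (S n) phi.

Lemma Eset_bound : forall phi, bound (Eset phi).
Proof.
  intro phi. exists 1. intros x [n ->]. unfold an.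
  assert (0 < INR (S n)) by (apply lt_0_INR; lia).
  pose proof (T_le (S n) (fun q => fl (INR (S n) * phi q))).
  apply Rmult_le_reg_l with (INR (S n)); [lra|]. unfold Rdiv.
  replace (INR (S n) * (Tm (S n) (fun q => fl (INR (S n) * phi q)) * / INR (S n))) with (Tm (S n) (fun q => fl (INR (S n) * phi q))) by (field; lra).
  lra.
Qed.

Lemma Eset_ne : forall phi, exists x, Eset phi x.
Proof. intro phi. exists (an 1 phi), O. reflexivity. Qed.

Definition Int (phi : Q -> R) : R := proj1_sig (completeness (Eset phi) (Eset_bound phi) (Eset_ne phi)).

Lemma Int_lub : forall phi, is_lub (Eset phi) (Int phi).
Proof. intro phi. unfold Int. apply proj2_sig. Qed.

Lemma Int_lb : forall phi n, an (S n) phi <= Int phi.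
Proof. intros phi n. destruct (Int_lub phi) as [H _]. apply H. exists n. reflexivity. Qed.

Lemma Int_ub : forall phi, (forall q, 0 <= phi q <= 1) -> forall n, Int phi <= an (S n) phi + / INR (S n).
Proof.
  intros phi hphi n. destruct (Int_lub phi) as [_ H]. apply H.
  intros x [k ->]. apply an_cmp; auto; lia.
Qed.

Lemma small_zero : forall x, (forall n, Rabs x <= 2 / INR (S n)) -> x = 0.
Proof.
  intros x H. apply NNPP; intro Hx.
  assert (Hp : 0 < Rabs x) by (apply Rabs_pos_lt; auto).
  destruct (archimed (2 / Rabs x)) as [Ha _].
  assert (0 < up (2 / Rabs x))%Z.
  { apply lt_IZR. simpl. assert (0 < 2 / Rabs x) by (apply Rdiv_lt_0_compat; lra). lra. }
  specialize (H (Z.to_nat (up (2 / Rabs x)))).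
  rewrite S_INR, INR_IZR_INZ, Z2Nat.id in H by lia.
  assert (0 < IZR (up (2 / Rabs x)) + 1) by (apply IZR_lt in H0; simpl in H0; lra).
  apply Rmult_le_compat_r with (r := IZR (up (2 / Rabs x)) + 1) in H; [|lra].
  replace (2 / (IZR (up (2 / Rabs x)) + 1) * (IZR (up (2 / Rabs x)) + 1)) with 2 in H by (field; lra).
  replace (2 / Rabs x) with (2 * / Rabs x) in Ha by reflexivity.
  apply Rmult_lt_compat_l with (r := Rabs x) in Ha; [|lra].
  replace (Rabs x * (2 * / Rabs x)) with 2 in Ha by (field; lra).
  nra.
Qed.

Lemma Int_add : forall phi psi, (forall q, 0 <= phi q) -> (forall q, 0 <= psi q) ->
  (forall q, phi q + psi q <= 1) -> Int (fun q => phi q + psi q) = Int phi + Int psi.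
Proof.
  intros phi psi h1 h2 h3.
  assert (hp : forall q, 0 <= phi q <= 1) by (intro q; specialize (h1 q); specialize (h2 q); specialize (h3 q); lra).
  assert (hs : forall q, 0 <= psi q <= 1) by (intro q; specialize (h1 q); specialize (h2 q); specialize (h3 q); lra).
  assert (hps : forall q, 0 <= phi q + psi q <= 1) by (intro q; specialize (h1 q); specialize (h2 q); specialize (h3 q); lra).
  assert (key : forall n, (1 <= n)%nat ->
     an n phi + an n psi <= an n (fun q => phi q + psi q) <= an n phi + an n psi + / INR n).
  { intros n Hn. assert (Hnp : 0 < INR n) by (apply lt_0_INR; lia).
    set (f1 := fun q => fl (INR n * phi q)). set (f2 := fun q => fl (INR n * psi q)).
    set (f3 := fun q => fl (INR n * (phi q + psi q))).
    assert (A1 : forall q, (f1 q + f2 q <= f3 q)%nat).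
    { intro q. unfold f1, f2, f3. apply fl_ge. { specialize (hps q); nra. }
      destruct (fl_spec (INR n * phi q)) as [a _]. { specialize (hp q); nra. }
      destruct (fl_spec (INR n * psi q)) as [b _]. { specialize (hs q); nra. }
      rewrite plus_INR. lra. }
    assert (A2 : forall q, (f3 q <= f1 q + f2 q + 1)%nat).
    { intro q. apply Nat.lt_succ_r. unfold f1, f2, f3. apply fl_lt. { specialize (hps q); nra. }
      destruct (fl_spec (INR n * phi q)) as [_ a]. { specialize (hp q); nra. }
      destruct (fl_spec (INR n * psi q)) as [_ b]. { specialize (hs q); nra. }
      rewrite S_INR, plus_INR, plus_INR. simpl (INR 1). lra. }
    assert (B3 : forall q, (f3 q <= n)%nat) by (intro q; apply (fl_bound _ hps)).
    assert (T1 : Tm n f1 + Tm n f2 <= Tm n f3).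
    { rewrite <- (T_add n n) by (intro q; specialize (A1 q); specialize (B3 q); lia).
      apply T_mono; auto. }
    assert (T2 : Tm n f3 <= Tm n f1 + Tm n f2 + 1).
    { rewrite <- (T_ext n (S n) f3) by auto.
      apply Rle_trans with (Tm (S n) (fun q => (f1 q + f2 q + 1)%nat)).
      { apply T_mono; auto. intro q. specialize (A1 q); specialize (B3 q). lia. }
      rewrite (T_add 1 (S n)) by (intro q; specialize (A1 q); specialize (B3 q); lia).
      rewrite (T_add n (S n)) by (intro q; specialize (A1 q); specialize (B3 q); lia).
      rewrite (T_const (S n) 1) by lia.
      rewrite (T_ext n (S n) f1) by (first [lia | intro q; specialize (A1 q); specialize (B3 q); lia]).
      rewrite (T_ext n (S n) f2) by (first [lia | intro q; specialize (A1 q); specialize (B3 q); lia]).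
      simpl (INR 1). lra. }
    unfold an. fold f1 f2 f3. unfold Rdiv.
    split.
    - rewrite <- Rmult_plus_distr_r. apply Rmult_le_compat_r; [left; apply Rinv_0_lt_compat; lra|lra].
    - replace (Tm n f1 * / INR n + Tm n f2 * / INR n + / INR n) with ((Tm n f1 + Tm n f2 + 1) * / INR n) by ring.
      apply Rmult_le_compat_r; [left; apply Rinv_0_lt_compat; lra|lra]. }
  apply Rminus_diag_uniq. apply small_zero. intro n.
  pose proof (key (S n) ltac:(lia)).
  pose proof (Int_lb phi n). pose proof (Int_lb psi n). pose proof (Int_lb (fun q => phi q + psi q) n).
  pose proof (Int_ub phi hp n). pose proof (Int_ub psi hs n). pose proof (Int_ub _ hps n).
  assert (0 < / INR (S n)) by (apply Rinv_0_lt_compat, lt_0_INR; lia).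
  unfold Rdiv. apply Rabs_le. lra.
Qed.

Lemma Int_one : Int (fun _ => 1) = 1.
Proof.
  assert (E : forall n, an (S n) (fun _ => 1) = 1).
  { intro n. unfold an. assert (0 < INR (S n)) by (apply lt_0_INR; lia).
    replace (fun _ : Q => fl (INR (S n) * 1)) with (fun _ : Q => S n).
    { rewrite T_const by lia. field. lra. }
    apply functional_extensionality; intro q.
    assert (S n <= fl (INR (S n) * 1))%nat by (apply fl_ge; lra).
    assert (fl (INR (S n) * 1) < S (S n))%nat by (apply fl_lt; [lra|]; rewrite (S_INR (S n)); lra).
    lia. }
  pose proof (Int_lb (fun _ => 1) O). rewrite E in H.
  destruct (Int_lub (fun _ => 1)) as [_ Hl].
  assert (Int (fun _ => 1) <= 1). { apply Hl. intros x [k ->]. rewrite E. lra. }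
  lra.
Qed.

Lemma Int_nonneg : forall phi, (forall q, 0 <= phi q <= 1) -> 0 <= Int phi.
Proof. intros phi h. pose proof (Int_lb phi O). pose proof (an_range phi 1 ltac:(lia)). lra. Qed.

Lemma Int_transl : (forall g A, m (fun x => A (gmul (ginv g) x)) = m A) ->
  forall phi h, Int (fun q => phi (gmul h q)) = Int phi.
Proof.
  intros minv phi h.
  assert (E : forall n, an n (fun q => phi (gmul h q)) = an n phi).
  { intro n. unfold an. f_equal. apply (T_transl minv n (fun q => fl (INR n * phi q)) h). }
  assert (ES : Eset (fun q => phi (gmul h q)) = Eset phi).
  { apply pred_ext. intro x. unfold Eset. split; intros [k Hk]; exists k; rewrite Hk, ?E; auto. }
  unfold Int. generalize (Eset_bound (fun q => phi (gmul h q))) (Eset_ne (fun q => phi (gmul h q))).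
  rewrite ES. intros b e. f_equal. f_equal. apply proof_irrelevance. apply proof_irrelevance.
Qed.
End Integ.

Lemma amenable_ext : forall (N G Q : Group) (i : N -> G) (p : G -> Q),
  short_exact i p -> amenable N -> amenable Q -> amenable G.
Proof.
  intros N G Q i p [hi [hp [ii [sp kp]]]] [mN [mN1 [mN0 [mNa mNi]]]] [mQ [mQ1 [mQ0 [mQa mQi]]]].
  assert (hmN : is_mean mN) by (split; auto).
  assert (hmQ : is_mean mQ) by (split; auto).
  set (sig := fun q => proj1_sig (constructive_indefinite_description _ (sp q))).
  assert (Hsig : forall q, p (sig q) = q) by (intro q; unfold sig; apply proj2_sig).
  set (phi := fun (A : G -> Prop) (q : Q) => mN (fun n => A (gmul (sig q) (i n)))).
  assert (Hphi : forall A q, 0 <= phi A q <= 1).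
  { intros A q. unfold phi. split; [apply mN0|apply (mean_le1 _ _ hmN)]. }
  exists (fun A => Int Q mQ hmQ (phi A)). split; [|split; [|split]].
  - unfold phi. rewrite mN1. apply (Int_one Q mQ hmQ).
  - intro A. apply (Int_nonneg Q mQ hmQ). auto.
  - intros A B D.
    replace (phi (fun x => A x \/ B x)) with (fun q => phi A q + phi B q).
    + apply (Int_add Q mQ hmQ).
      * intro q; apply Hphi.
      * intro q; apply Hphi.
      * intro q. unfold phi. rewrite <- mNa. { apply (mean_le1 _ _ hmN). } intros n; apply D.
    + apply functional_extensionality; intro q. unfold phi. rewrite mNa; auto. intros n; apply D.
  - intros g A.
    replace (phi (fun x => A (gmul (ginv g) x))) with (fun q => phi A (gmul (p (ginv g)) q)).
    + apply (Int_transl Q mQ hmQ mQi).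
    + apply functional_extensionality; intro q. unfold phi.
      set (q' := gmul (p (ginv g)) q).
      set (y := gmul (ginv g) (sig q)).
      assert (Py : p y = q') by (unfold y, q'; rewrite hp, Hsig; reflexivity).
      assert (K1 : p (gmul (ginv (sig q')) y) = gone).
      { rewrite hp, (hom_inv _ _ p hp), Py, Hsig. apply gmulV. }
      destruct (proj1 (kp _) K1) as [n0 Hn0].
      assert (Ey : y = gmul (sig q') (i n0)).
      { rewrite Hn0, gmulA, gmulV_r, gmul1. reflexivity. }
      rewrite <- (mNi (ginv n0) (fun n => A (gmul (sig q') (i n)))).
      f_equal. apply functional_extensionality; intro n.
      rewrite ginv_inv, hi, gmulA, <- Ey. unfold y. rewrite gmulA. reflexivity.
Qed.

Definition normal_pred {G : Group} (M : G -> Prop) : Prop :=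
  M gone /\ (forall x y, M x -> M y -> M (gmul x y)) /\ (forall x, M x -> M (ginv x)) /\
  (forall g x, M x -> M (gmul (gmul g x) (ginv g))).

Section Quot.
Variable G : Group.
Variable M : G -> Prop.
Hypothesis hM : normal_pred M.

Let M1 : M gone. Proof. apply hM. Qed.
Let Mmul : forall x y, M x -> M y -> M (gmul x y). Proof. apply hM. Qed.
Let Minv : forall x, M x -> M (ginv x). Proof. apply hM. Qed.
Let Mconj : forall g x, M x -> M (gmul (gmul g x) (ginv g)). Proof. apply hM. Qed.

Definition coset (x : G) : G -> Prop := fun y => M (gmul (ginv x) y).
Definition qcar : Type := {S : G -> Prop | exists x, S = coset x}.
Definition cls (x : G) : qcar := exist _ (coset x) (ex_intro _ x eq_refl).

Lemma cls_eq : forall x y, cls x = cls y <-> M (gmul (ginv x) y).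
Proof.
  intros x y. split.
  - intro H. assert (E : coset x = coset y) by (apply (f_equal (@proj1_sig _ _)) in H; exact H).
    assert (coset y y) by (unfold coset; rewrite gmulV; exact M1).
    rewrite <- E in H0. exact H0.
  - intro H. unfold cls.
    assert (E : coset x = coset y).
    { apply pred_ext; intro z; unfold coset. split; intro Hz.
      - replace (gmul (ginv y) z) with (gmul (ginv (gmul (ginv x) y)) (gmul (ginv x) z)).
        + apply Mmul; auto.
        + rewrite ginv_mul, ginv_inv, <- gmulA, (gmulA G x (ginv x)), gmulV_r, gmul1. reflexivity.
      - replace (gmul (ginv x) z) with (gmul (gmul (ginv x) y) (gmul (ginv y) z)).
        + apply Mmul; auto.
        + rewrite <- gmulA, (gmulA G y (ginv y)), gmulV_r, gmul1. reflexivity. }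
    revert H. generalize (ex_intro (fun x0 : G => coset x = coset x0) x eq_refl).
    generalize (ex_intro (fun x0 : G => coset y = coset x0) y eq_refl).
    rewrite E. intros e1 e2 _. f_equal. apply proof_irrelevance.
Qed.

Definition rep (S : qcar) : G := proj1_sig (constructive_indefinite_description _ (proj2_sig S)).

Lemma cls_rep : forall S, cls (rep S) = S.
Proof.
  intro S. unfold rep. destruct (constructive_indefinite_description _ (proj2_sig S)) as [x Hx]. simpl.
  destruct S as [S0 HS]. simpl in Hx. subst S0. unfold cls. f_equal. apply proof_irrelevance.
Qed.

Lemma qcar_ind : forall P : qcar -> Prop, (forall x, P (cls x)) -> forall S, P S.
Proof. intros P H S. rewrite <- (cls_rep S). apply H. Qed.

Lemma rep_cls : forall x, M (gmul (ginv x) (rep (cls x))).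
Proof. intro x. apply cls_eq. rewrite cls_rep. reflexivity. Qed.

Definition qmul (S T : qcar) : qcar := cls (gmul (rep S) (rep T)).
Definition qinv (S : qcar) : qcar := cls (ginv (rep S)).
Definition qone : qcar := cls gone.

Lemma qmul_cls : forall x y, qmul (cls x) (cls y) = cls (gmul x y).
Proof.
  intros x y. unfold qmul. apply cls_eq.
  pose proof (rep_cls x) as a. pose proof (rep_cls y) as b.
  set (x' := rep (cls x)) in *. set (y' := rep (cls y)) in *.
  replace (gmul (ginv (gmul x' y')) (gmul x y)) with
    (gmul (gmul (gmul (ginv y') (ginv (gmul (ginv x) x'))) (ginv (ginv y'))) (ginv (gmul (ginv y) y'))).
  - apply Mmul; [apply Mconj, Minv; auto| apply Minv; auto].
  - gsimp. reflexivity.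
Qed.

Lemma qinv_cls : forall x, qinv (cls x) = cls (ginv x).
Proof.
  intro x. unfold qinv. apply cls_eq. pose proof (rep_cls x) as a. set (x' := rep (cls x)) in *.
  replace (gmul (ginv (ginv x')) (ginv x)) with (gmul (gmul x (gmul (ginv x) x')) (ginv x)).
  - apply Mconj; auto.
  - gsimp. reflexivity.
Qed.

Definition Quot : Group.
Proof.
  refine {| gcar := qcar; gmul := qmul; gone := qone; ginv := qinv |}.
  - intros S T V. revert S. apply qcar_ind; intro x. revert T. apply qcar_ind; intro y.
    revert V. apply qcar_ind; intro z. rewrite !qmul_cls, gmulA. reflexivity.
  - apply qcar_ind; intro x. unfold qone. rewrite qmul_cls, gmul1. reflexivity.
  - apply qcar_ind; intro x. unfold qone. rewrite qinv_cls, qmul_cls, gmulV. reflexivity.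
Defined.

Definition qproj : G -> Quot := cls.

Lemma qproj_hom : is_hom qproj.
Proof. intros x y. symmetry. apply qmul_cls. Qed.

Lemma qproj_surj : surjective qproj.
Proof. intro S. exists (rep S). apply cls_rep. Qed.

Lemma qproj_eq : forall x y, qproj x = qproj y <-> M (gmul (ginv x) y).
Proof. apply cls_eq. Qed.

Lemma qproj_one : forall x, qproj x = gone <-> M x.
Proof.
  intro x. change (@gone Quot) with (cls gone). unfold qproj. rewrite cls_eq. rewrite gmul1_r.
  split; intro H; [rewrite <- (ginv_inv G x)|]; apply Minv; auto.
Qed.
End Quot.

Arguments qproj {G} M hM.

Section Ker.
Variables G H : Group.
Variable f : G -> H.
Hypothesis hf : is_hom f.

Definition kcar : Type := {x : G | f x = gone}.
Lemma ksig_eq : forall a b : kcar, proj1_sig a = proj1_sig b -> a = b.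
Proof. intros [a pa] [b pb]. simpl. intros ->. f_equal. apply proof_irrelevance. Qed.

Definition kmul (a b : kcar) : kcar.
Proof.
  exists (gmul (proj1_sig a) (proj1_sig b)). rewrite hf, (proj2_sig a), (proj2_sig b). apply gmul1.
Defined.
Definition kone : kcar := exist _ gone (hom_one G H f hf).
Definition kinv (a : kcar) : kcar.
Proof. exists (ginv (proj1_sig a)). rewrite (hom_inv G H f hf), (proj2_sig a). apply ginv_one. Defined.

Definition Ker : Group.
Proof.
  refine {| gcar := kcar; gmul := kmul; gone := kone; ginv := kinv |}.
  - intros; apply ksig_eq; simpl; apply gmulA.
  - intros; apply ksig_eq; simpl; apply gmul1.
  - intros; apply ksig_eq; simpl; apply gmulV.
Defined.

Definition kincl : Ker -> G := fun a => proj1_sig a.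

Lemma ker_exact : surjective f -> short_exact kincl f.
Proof.
  intro sf. split; [|split; [exact hf|split; [|split; [exact sf|]]]].
  - intros a b. reflexivity.
  - intros a b. apply ksig_eq.
  - intro x. split.
    + intro Hx. exists (exist _ x Hx). reflexivity.
    + intros [[y Hy] <-]. exact Hy.
Qed.

Lemma ker_comm : (forall x y : G, f x = gone -> f y = gone -> gmul x y = gmul y x) ->
  forall a b : Ker, gmul a b = gmul b a.
Proof. intros Hc [a pa] [b pb]. apply ksig_eq. simpl. auto. Qed.
End Ker.

Lemma derived_sub : forall (G : Group) j, derived G j gone /\
  (forall x y, derived G j x -> derived G j y -> derived G j (gmul x y)) /\
  (forall x, derived G j x -> derived G j (ginv x)).
Proof.
  intros G [|j]; simpl.
  - auto.
  - split; [apply gen_one|split; [apply gen_mul|apply gen_inv]].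
Qed.

Lemma derived_hom : forall (G H : Group) (f : G -> H), is_hom f ->
  forall j x, derived G j x -> derived H j (f x).
Proof.
  intros G H f hf j. induction j; simpl; auto.
  intros x Hx. induction Hx.
  - destruct H0 as [x [y [hx [hy ->]]]]. apply gen_in. exists (f x), (f y).
    split; [auto|split; [auto|]]. unfold commg. rewrite !hf, !(hom_inv G H f hf). reflexivity.
  - rewrite (hom_one G H f hf). apply gen_one.
  - rewrite hf. apply gen_mul; auto.
  - rewrite (hom_inv G H f hf). apply gen_inv; auto.
Qed.

Lemma derived_mono : forall (G : Group) j x, derived G (S j) x -> derived G j x.
Proof.
  intros G j x Hx. simpl in Hx. destruct (derived_sub G j) as [d1 [dm di]].
  induction Hx; auto.
  destruct H as [x [y [hx [hy ->]]]]. unfold commg. apply dm; apply dm; auto.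
Qed.

Lemma abelian_solvable : forall A : Group, (forall x y : A, gmul x y = gmul y x) -> solvable A.
Proof.
  intros A c. exists 1%nat. intros x Hx. simpl in Hx. induction Hx.
  - destruct H as [x [y [_ [_ ->]]]]. unfold commg. rewrite (c x y). gsimp. reflexivity.
  - reflexivity.
  - rewrite IHHx1, IHHx2. apply gmul1.
  - rewrite IHHx. apply ginv_one.
Qed.

Definition closedP (P : Group -> Prop) : Prop :=
  (forall (G H : Group) (f : G -> H), is_hom f -> surjective f -> P G -> P H) /\
  (forall (N G Q : Group) (i : N -> G) (p : G -> Q), short_exact i p -> P N -> P Q -> P G) /\
  (forall A : Group, (forall x y : A, gmul x y = gmul y x) -> P A).

Section Chain.
Variables N G Q : Group.
Variable i : N -> G.
Variable p : G -> Q.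
Hypothesis hse : short_exact i p.

Let hi : is_hom i. Proof. apply hse. Qed.
Let hp : is_hom p. Proof. apply hse. Qed.
Let ii : injective i. Proof. apply hse. Qed.
Let sp : surjective p. Proof. apply hse. Qed.
Let kp : forall x, p x = gone <-> exists n, i n = x. Proof. apply hse. Qed.

Definition Mj (j : nat) : G -> Prop := fun x => exists n, derived N j n /\ i n = x.

Lemma conj_in_N : forall (g : G) (a : N), exists c, i c = gmul (gmul g (i a)) (ginv g).
Proof.
  intros g a. apply kp. rewrite !hp, (hom_inv G Q p hp).
  assert (p (i a) = gone) by (apply kp; eauto). rewrite H, gmul1_r, gmulV_r. reflexivity.
Qed.

Lemma Mj_normal : forall j, normal_pred (Mj j).
Proof.
  intro j. destruct (derived_sub N j) as [d1 [dm di]].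
  split; [|split; [|split]].
  - exists gone. split; auto. apply (hom_one N G i hi).
  - intros x y [a [ha <-]] [b [hb <-]]. exists (gmul a b). split; auto.
  - intros x [a [ha <-]]. exists (ginv a). split; auto. apply (hom_inv N G i hi).
  - intros g x [a [ha <-]].
    set (c := fun a => proj1_sig (constructive_indefinite_description _ (conj_in_N g a))).
    assert (Hc : forall a, i (c a) = gmul (gmul g (i a)) (ginv g)) by (intro; unfold c; apply proj2_sig).
    assert (hc : is_hom c).
    { intros u v. apply ii. rewrite hi, !Hc, hi. gsimp. reflexivity. }
    exists (c a). split; auto. apply (derived_hom N N c hc). exact ha.
Qed.

Definition Hj (j : nat) : Group := Quot G (Mj j) (Mj_normal j).
Definition pr (j : nat) : G -> Hj j := qproj (Mj j) (Mj_normal j).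

Lemma pr_hom : forall j, is_hom (pr j).
Proof. intro j. apply qproj_hom. Qed.
Lemma pr_surj : forall j, surjective (pr j).
Proof. intro j. apply qproj_surj. Qed.

Lemma pr_one : forall j x, pr j x = gone <-> Mj j x.
Proof. intro j. apply (qproj_one G (Mj j) (Mj_normal j)). Qed.
Lemma pr_eq : forall j x y, pr j x = pr j y <-> Mj j (gmul (ginv x) y).
Proof. intro j. apply (qproj_eq G (Mj j) (Mj_normal j)). Qed.

Definition pij (j : nat) (X : Hj (S j)) : Hj j := pr j (rep G (Mj (S j)) X).

Lemma pij_pr : forall j x, pij j (pr (S j) x) = pr j x.
Proof.
  intros j x. unfold pij. symmetry. apply pr_eq.
  destruct (rep_cls G (Mj (S j)) (Mj_normal (S j)) x) as [a [ha Ha]].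
  exists a. split; auto. apply derived_mono. exact ha.
Qed.

Lemma pij_hom : forall j, is_hom (pij j).
Proof.
  intros j X T. revert X. apply qcar_ind; intro x. revert T. apply qcar_ind; intro y.
  change (cls G (Mj (S j)) x) with (pr (S j) x). change (cls G (Mj (S j)) y) with (pr (S j) y).
  rewrite <- pr_hom, !pij_pr. apply pr_hom.
Qed.

Lemma pij_surj : forall j, surjective (pij j).
Proof.
  intros j T. destruct (pr_surj j T) as [x <-]. exists (pr (S j) x). apply pij_pr.
Qed.

Lemma ker_pij_comm : forall j (x y : Hj (S j)), pij j x = gone -> pij j y = gone -> gmul x y = gmul y x.
Proof.
  intros j x0 y0. destruct (pr_surj (S j) x0) as [x <-]. destruct (pr_surj (S j) y0) as [y <-].
  rewrite !pij_pr, !pr_one. intros [a [ha <-]] [b [hb <-]].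
  rewrite <- !pr_hom. apply pr_eq.
  exists (commg b a). split.
  - simpl. apply gen_in. exists b, a. auto.
  - unfold commg. rewrite !hi, !(hom_inv N G i hi). gsimp. reflexivity.
Qed.

Lemma chain_closed : forall P, closedP P -> P Q -> forall j, P (Hj j).
Proof.
  intros P [Pimg [Pext Pab]] PQ j. induction j.
  - set (sig := fun q => proj1_sig (constructive_indefinite_description _ (sp q))).
    assert (Hsig : forall q, p (sig q) = q) by (intro q; unfold sig; apply proj2_sig).
    assert (M0 : forall x, Mj 0 x <-> p x = gone).
    { intro x. rewrite kp. unfold Mj. simpl. split; intros [n Hn]; exists n; tauto. }
    apply (Pimg Q (Hj 0) (fun q => pr 0 (sig q))); auto.
    + intros a b. rewrite <- pr_hom. apply pr_eq. apply M0.
      rewrite hp, (hom_inv G Q p hp), !hp, !Hsig. gsimp. reflexivity.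
    + intro T. destruct (pr_surj 0 T) as [x <-]. exists (p x). apply pr_eq. apply M0.
      rewrite hp, (hom_inv G Q p hp), Hsig, gmulV. reflexivity.
  - apply (Pext (Ker (Hj (S j)) (Hj j) (pij j) (pij_hom j)) (Hj (S j)) (Hj j)
             (kincl (Hj (S j)) (Hj j) (pij j) (pij_hom j)) (pij j)).
    + apply ker_exact, pij_surj.
    + apply Pab. apply ker_comm. apply ker_pij_comm.
    + exact IHj.
Qed.
End Chain.

Lemma main_gen : forall (N G Q : Group) (i : N -> G) (p : G -> Q),
  short_exact i p -> residually solvable N ->
  forall g : G, g <> gone -> exists (H : Group) (f : G -> H),
    (forall P, closedP P -> P Q -> P H) /\ is_hom f /\ surjective f /\ f g <> gone.
Proof.
  intros N G Q i p hse Hres g Hg.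
  destruct hse as [hi [hp [ii [sp kp]]]] eqn:Ehse.
  destruct (classic (p g = gone)) as [Hpg|Hpg].
  - destruct (proj1 (kp g) Hpg) as [n0 Hn0]. subst g.
    assert (Hn : n0 <> gone). { intro E. apply Hg. rewrite E. apply (hom_one N G i hi). }
    destruct (Hres n0 Hn) as [S0 [f [[k Hk] [hf [sf Hfn]]]]].
    exists (Hj N G Q i p hse k), (pr N G Q i p hse k). split; [|split; [|split]].
    + intros P cP PQ. apply chain_closed; auto.
    + apply pr_hom.
    + apply pr_surj.
    + rewrite pr_one. intros [n [hn En]]. apply ii in En. subst n.
      apply Hfn. apply Hk. apply (derived_hom N S0 f hf). exact hn.
  - exists Q, p. split; [|split; [|split]]; auto.
Qed.

Lemma amenable_closed : closedP amenable.
Proof.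
  split; [|split].
  - exact amenable_image.
  - exact amenable_ext.
  - exact abelian_amenable.
Qed.

Lemma EA_closedP : forall C, EA_closed C -> closedP C.
Proof.
  intros C [_ [Csol [_ [Cquo [Cext _]]]]]. split; [|split].
  - intros G H f hf sf CG. exact (Cquo G H f hf sf CG).
  - exact Cext.
  - intros A c. apply Csol. apply abelian_solvable. exact c.
Qed.

Theorem lemma1p3 :
  (forall (N G Q : Group) (i : N -> G) (p : G -> Q),
      short_exact i p -> residually solvable N -> amenable Q ->
      residually amenable G) /\
  (forall (N G Q : Group) (i : N -> G) (p : G -> Q),
      short_exact i p -> residually solvable N -> elementary_amenable Q ->
      residually elementary_amenable G).
Proof.
  split.
  - intros N G Q i p hse Hres HQ g Hg.
    destruct (main_gen N G Q i p hse Hres g Hg) as [H [f [HP [hf [sf Hf]]]]].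
    exists H, f. split; auto. apply HP; auto. apply amenable_closed.
  - intros N G Q i p hse Hres HQ g Hg.
    destruct (main_gen N G Q i p hse Hres g Hg) as [H [f [HP [hf [sf Hf]]]]].
    exists H, f. split; auto. intros C hC. apply HP. { apply EA_closedP; auto. } apply HQ; auto.
Qed.
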